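(* Let $W_1\subseteq C_1^\omega$ and $W_2\subseteq C_2^\omega$ be prefix-independent objectives over disjoint sets of colours $C_1,C_2$, let $\kappa$ be a cardinal, and let $(U_1,\le_1)$ and $(U_2,\le_2)$ be well-monotone graphs which are respectively $(\kappa,W_1)$-universal and $(\kappa,W_2)$-universal for prefix-independent objectives. Then the lexicographical product $U_1\ltimes U_2$ is monotone and $(\kappa,W_1\ltimes W_2)$-universal for prefix-independent objectives.
   Context: A $D$-pregraph: vertex set $V(G)$, edges $E(G)\subseteq V(G)\times D\times V(G)$ written $v\xrightarrow{c}v'$; a $D$-graph if every vertex has an outgoing edge; a $D$-pretree is a $D$-pregraph with root $t_0$ such that each vertex has a unique path from $t_0$. A morphism maps vertices so edges go to edges of the same colour. A (pre)graph satisfies an objective $W$ if every infinite path from every vertex has colour sequence in $W$. $W$ is prefix-independent if $uw\in W\iff w\in W$. A $D$-graph $U$ is $(\kappa,W)$-universal for prefix-independent objectives if $U$ satisfies $W$ and every $D$-pretree of cardinality $<\kappa$ satisfying $W$ admits a morphism into $U$. A partially ordered graph is monotone if $u\ge v\xrightarrow{c}v'\ge u'$ implies $u\xrightarrow{c}u'$, well-monotone if moreover the order is well-founded. Let $C=C_1\sqcup C_2$. For $w\in C^\omega$ let $w^1,w^2$ be the subsequences of letters from $C_1$, resp. $C_2$. $W_1\ltimes W_2=\{w\in C^\omega: (w^2\text{ infinite and }w^2\in W_2)\text{ or }(w^2\text{ finite and }w^1\in W_1)\}$. For a $C_1$-graph $(U_1,\le_1)$ and a $C_2$-graph $(U_2,\le_2)$,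 $U=U_1\ltimes U_2$ is the $C$-graph on $V(U_1)\times V(U_2)$ ordered by $(u_1,u_2)\le(u_1',u_2')\iff u_2<_2u_2'$ or ($u_2=u_2'$ and $u_1\le_1u_1'$), with edges $(u_1,u_2)\xrightarrow{c_1}(u_1',u_2')$ for $c_1\in C_1$ whenever $u_2>_2u_2'$ or ($u_2=u_2'$ and $u_1\xrightarrow{c_1}u_1'\in E(U_1)$), and $(u_1,u_2)\xrightarrow{c_2}(u_1',u_2')$ for $c_2\in C_2$ whenever $u_2\xrightarrow{c_2}u_2'\in E(U_2)$. *)

(* Defs.v *)
From Stdlib Require Import List Arith.
Import ListNotations.
Set Implicit Arguments.

Definition word (D : Type) := nat -> D.

Definition objective (D : Type) := word D -> Prop.

Fixpoint prepend (D : Type) (u : list D) (w : word D) : word D :=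
  match u with
  | [] => w
  | c :: u' => fun n => match n with 0 => c | S k => prepend u' w k end
  end.

Definition prefix_independent (D : Type) (W : objective D) : Prop :=
  forall (u : list D) (w : word D), W (prepend u w) <-> W w.

(** A D-pregraph is given by a vertex type [V] and an edge relation
    [E u c v] meaning u --c--> v. *)
Definition edges (V D : Type) := V -> D -> V -> Prop.

Definition is_graph (V D : Type) (E : edges V D) : Prop :=
  forall v, exists c v', E v c v'.

Fixpoint is_path (V D : Type) (E : edges V D) (u : V) (p : list (D * V)) (v : V)
  : Prop :=
  match p with
  | [] => u = v
  | (c, x) :: p' => E u c x /\ is_path E x p' v
  end.

Definition is_pretree (V D : Type) (E : edges V D) (t0 : V) : Prop :=
  forall v, exists p, is_path E t0 p v /\
    forall q, is_path E t0 q v -> q = p.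

Definition satisfies (V D : Type) (E : edges V D) (W : objective D) : Prop :=
  forall (vs : nat -> V) (cs : word D),
    (forall n, E (vs n) (cs n) (vs (S n))) -> W cs.

Definition is_morphism (V V' D : Type) (E : edges V D) (E' : edges V' D)
  (phi : V -> V') : Prop :=
  forall u c v, E u c v -> E' (phi u) c (phi v).

(** Cardinals: the cardinal kappa is represented by a type [K] of
    cardinality kappa; |T| < kappa means T injects into K but K does
    not inject into T. *)
Definition injective (A B : Type) (f : A -> B) : Prop :=
  forall x y, f x = f y -> x = y.

Definition card_lt (T K : Type) : Prop :=
  (exists f : T -> K, injective f) /\ ~ (exists g : K -> T, injective g).

Definition universal (K D U : Type) (EU : edges U D) (W : objective D) : Prop :=
  is_graph EU /\ satisfies EU W /\
  forall (T : Type) (ET : edges T D) (t0 : T),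
    is_pretree ET t0 -> card_lt T K -> satisfies ET W ->
    exists phi : T -> U, is_morphism ET EU phi.

Definition is_partial_order (V : Type) (le : V -> V -> Prop) : Prop :=
  (forall x, le x x) /\
  (forall x y, le x y -> le y x -> x = y) /\
  (forall x y z, le x y -> le y z -> le x z).

Definition strict (V : Type) (le : V -> V -> Prop) (x y : V) : Prop :=
  le x y /\ x <> y.

Definition monotone (V D : Type) (E : edges V D) (le : V -> V -> Prop) : Prop :=
  forall u v c v' u', le v u -> E v c v' -> le u' v' -> E u c u'.

Definition well_monotone (V D : Type) (E : edges V D) (le : V -> V -> Prop)
  : Prop :=
  is_partial_order le /\ monotone E le /\ well_founded (strict le).

(** Subsequence of the letters selected by [p]: [v] is the sequence of
    [p]-images of the letters of [w] for which [p] is defined, enumerated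
    in order by the strictly increasing [f]. *)
Definition filtered (C A : Type) (p : C -> option A) (w : word C) (v : word A)
  : Prop :=
  exists f : nat -> nat,
    (forall n, f n < f (S n)) /\
    (forall n, p (w (f n)) = Some (v n)) /\
    (forall k, p (w k) <> None -> exists n, f n = k).

Definition proj1c (C1 C2 : Type) (c : C1 + C2) : option C1 :=
  match c with inl a => Some a | inr _ => None end.
Definition proj2c (C1 C2 : Type) (c : C1 + C2) : option C2 :=
  match c with inl _ => None | inr b => Some b end.

Definition is2 (C1 C2 : Type) (c : C1 + C2) : Prop :=
  match c with inl _ => False | inr _ => True end.

Definition infinite2 (C1 C2 : Type) (w : word (C1 + C2)) : Prop :=
  forall N, exists k, N <= k /\ is2 (w k).
Definition finite2 (C1 C2 : Type) (w : word (C1 + C2)) : Prop :=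
  exists N, forall k, N <= k -> ~ is2 (w k).

Definition lex_obj (C1 C2 : Type) (W1 : objective C1) (W2 : objective C2)
  : objective (C1 + C2) :=
  fun w =>
    (infinite2 w /\ exists v, filtered (@proj2c C1 C2) w v /\ W2 v) \/
    (finite2 w /\ exists v, filtered (@proj1c C1 C2) w v /\ W1 v).

Definition lex_le (V1 V2 : Type) (le1 : V1 -> V1 -> Prop) (le2 : V2 -> V2 -> Prop)
  (x y : V1 * V2) : Prop :=
  strict le2 (snd x) (snd y) \/ (snd x = snd y /\ le1 (fst x) (fst y)).

Definition lex_edges (V1 V2 C1 C2 : Type) (E1 : edges V1 C1) (E2 : edges V2 C2)
  (le2 : V2 -> V2 -> Prop) : edges (V1 * V2) (C1 + C2) :=
  fun x c y =>
    match c with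
    | inl c1 => strict le2 (snd y) (snd x) \/
                (snd x = snd y /\ E1 (fst x) c1 (fst y))
    | inr c2 => E2 (snd x) c2 (snd y)
    end.

(* Main.v *)
Require Import Defs.
From Stdlib Require Import List Arith Lia ConstructiveEpsilon Classical ClassicalEpsilon FunctionalExtensionality ProofIrrelevance.
Import ListNotations.
Lemma enum_inf (P : nat -> Prop) : (forall n, {P n}+{~P n}) ->
  (forall N, exists k, N <= k /\ P k) ->
  exists f : nat -> nat, (forall n, f n < f (S n)) /\ (forall n, P (f n)) /\
    (forall k, P k -> exists n, f n = k).
Proof.
  intros dec H.
  assert (dec' : forall N n, {N <= n /\ P n} + {~ (N <= n /\ P n)}).
  { intros N n. destruct (le_dec N n); destruct (dec n); [left; tauto|right;tauto|right;tauto|right;tauto]. }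
  pose (nxt := fun N => proj1_sig (epsilon_smallest _ (dec' N) (H N))).
  assert (Hn : forall N, N <= nxt N /\ P (nxt N) /\ forall k, N <= k -> P k -> nxt N <= k).
  { intro N. unfold nxt. destruct (epsilon_smallest _ (dec' N) (H N)) as [x [[h1 h2] h3]]; simpl.
    split; [|split]; auto. }
  pose (f := fix f n := match n with 0 => nxt 0 | S m => nxt (S (f m)) end).
  exists f. split; [|split].
  - intro n. simpl. destruct (Hn (S (f n))) as [a _]. lia.
  - intro n. destruct n; simpl; apply Hn.
  - intros k Pk.
    assert (Hf : forall n, n <= f n).
    { induction n; simpl. lia. destruct (Hn (S (f n))) as [a _]. lia. }
    assert (forall n, k <= f n -> exists m, f m = k).
    { induction n; intros h.
      - exists 0. simpl in *. destruct (Hn 0) as [_ [_ c]]. specialize (c k ltac:(lia) Pk). lia.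
      - destruct (le_lt_dec k (f n)) as [l|l]; [now apply IHn|].
        exists (S n). simpl in *. destruct (Hn (S (f n))) as [_ [_ c]]. specialize (c k l Pk). lia. }
    apply (H0 k (Hf k)).
Qed.

Lemma strict_mono_le (f : nat -> nat) : (forall n, f n < f (S n)) -> forall n m, n <= m -> f n <= f m.
Proof. intros H n m h. induction h. lia. specialize (H m). lia. Qed.

Lemma strict_mono_lt (f : nat -> nat) : (forall n, f n < f (S n)) -> forall n m, n < m -> f n < f m.
Proof. intros H n m h. induction h. apply H. specialize (H m). lia. Qed.

Lemma strict_mono_reflect (f : nat -> nat) : (forall n, f n < f (S n)) -> forall n m, f n < f m -> n < m.
Proof. intros H n m h. destruct (le_lt_dec m n) as [l|l]; auto.
  pose proof (strict_mono_le _ H _ _ l). lia. Qed.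

Lemma strict_mono_id (f : nat -> nat) : (forall n, f n < f (S n)) -> forall n, n <= f n.
Proof. intros H n; induction n. lia. specialize (H n). lia. Qed.

Lemma same_range (f g : nat -> nat) : (forall n, f n < f (S n)) -> (forall n, g n < g (S n)) ->
  (forall n, exists m, f n = g m) -> (forall n, exists m, g n = f m) -> forall n, f n = g n.
Proof.
  intros Hf Hg A B n. induction n as [n IH] using lt_wf_ind.
  destruct (B n) as [m Hm]. destruct (A n) as [m' Hm'].
  assert (n <= m).
  { destruct (le_lt_dec n m); auto. rewrite (IH m l) in Hm.
    pose proof (strict_mono_lt _ Hg _ _ l). lia. }
  assert (n <= m').
  { destruct (le_lt_dec n m'); auto. rewrite <- (IH m' l) in Hm'.
    pose proof (strict_mono_lt _ Hf _ _ l). lia. }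
  pose proof (strict_mono_le _ Hf _ _ H). pose proof (strict_mono_le _ Hg _ _ H0). lia.
Qed.

Lemma filtered_unique (C A : Type) (p : C -> option A) w v v' :
  filtered p w v -> filtered p w v' -> v = v'.
Proof.
  intros [f [f1 [f2 f3]]] [g [g1 [g2 g3]]].
  assert (E : forall n, f n = g n).
  { apply same_range; auto.
    - intro n. destruct (g3 (f n)) as [m Hm]. rewrite f2; discriminate. eauto.
    - intro n. destruct (f3 (g n)) as [m Hm]. rewrite g2; discriminate. eauto. }
  extensionality n. specialize (f2 n). specialize (g2 n). rewrite E in f2. congruence.
Qed.
Set Implicit Arguments.
Lemma is_path_app (V D : Type) (E : edges V D) p q u w :
  is_path E u (p ++ q) w <-> exists v, is_path E u p v /\ is_path E v q w.
Proof.
  revert u; induction p as [|[c x] p IH]; intro u; simpl.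
  - split; [intro h; exists u; auto | intros [v [-> h]]; auto].
  - rewrite IH. split.
    + intros [e [v [h1 h2]]]. exists v. auto.
    + intros [v [[e h1] h2]]. eauto.
Qed.

Lemma is_path_det (V D : Type) (E : edges V D) p u v v' :
  is_path E u p v -> is_path E u p v' -> v = v'.
Proof.
  revert u; induction p as [|[c x] p IH]; intro u; simpl.
  - congruence.
  - intros [_ h] [_ h']. eauto.
Qed.

Lemma pretree_no_in (V D : Type) (E : edges V D) r :
  is_pretree E r -> forall x c, ~ E x c r.
Proof.
  intros H x c e. destruct (H x) as [p [hp _]]. destruct (H r) as [q [_ hq]].
  assert (h1 : is_path E r (p ++ [(c, r)]) r).
  { apply is_path_app. exists x. simpl; auto. }
  pose proof (hq _ h1). pose proof (hq [] eq_refl).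
  subst q. destruct p; discriminate.
Qed.

Lemma pretree_parent (V D : Type) (E : edges V D) r :
  is_pretree E r -> forall a c a' c' b, E a c b -> E a' c' b -> a = a' /\ c = c'.
Proof.
  intros H a c a' c' b e e'. destruct (H a) as [p [hp _]]. destruct (H a') as [p' [hp' _]].
  destruct (H b) as [q [_ hq]].
  assert (h1 : is_path E r (p ++ [(c, b)]) b).
  { apply is_path_app. exists a. simpl; auto. }
  assert (h2 : is_path E r (p' ++ [(c', b)]) b).
  { apply is_path_app. exists a'. simpl; auto. }
  pose proof (hq _ h1) as h3. pose proof (hq _ h2) as h4.
  rewrite <- h4 in h3.
  apply app_inj_tail in h3. destruct h3 as [-> h3]. inversion h3; subst.
  split; auto. eapply is_path_det; eauto.
Qed.

Lemma uniq_paths (V D : Type) (E : edges V D) r :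
  (forall x c, ~ E x c r) ->
  (forall a c a' c' b, E a c b -> E a' c' b -> a = a' /\ c = c') ->
  forall q b, is_path E r q b -> forall q', is_path E r q' b -> q = q'.
Proof.
  intros N U q. induction q as [|[c x] q IH] using rev_ind; intros b h q' h'.
  - simpl in h; subst b. destruct q' as [|[c' x'] q'] using rev_ind; auto.
    apply is_path_app in h'. destruct h' as [v [_ [e ->]]]. exfalso; eapply N; eauto.
  - apply is_path_app in h. destruct h as [v [hv [e ->]]].
    destruct q' as [|[c' x'] q'] using rev_ind.
    + simpl in h'. subst. exfalso; eapply N; eauto.
    + apply is_path_app in h'. destruct h' as [v' [hv' [e' ->]]].
      destruct (U _ _ _ _ _ e e') as [-> ->]. f_equal. eapply IH; eauto.
Qed.

Fixpoint nthv (V D : Type) (v : V) (l : list (D*V)) (j : nat) : V :=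
  match j, l with
  | 0, _ => v
  | S j', (c, w) :: l' => nthv w l' j'
  | S _, [] => v
  end.

Lemma path_step (V D : Type) (E : edges V D) v l u dd :
  is_path E v l u -> forall j, j < length l -> E (nthv v l j) (fst (nth j l dd)) (nthv v l (S j)).
Proof.
  revert v; induction l as [|[c w] l IH]; intros v h j hj; simpl in *.
  - lia.
  - destruct h as [e h]. destruct j.
    + simpl. destruct l as [|[c' w'] l]; simpl; auto.
    + apply IH with (j := j) in h; [|lia]. simpl. exact h.
Qed.

Lemma path_end (V D : Type) (E : edges V D) v l u :
  is_path E v l u -> nthv v l (length l) = u.
Proof.
  revert v; induction l as [|[c w] l IH]; intros v h; simpl in *; auto.
  destruct h as [_ h]. auto.
Qed.

Lemma concat_paths (V D : Type) (E : edges V D) (x : nat -> V) (b : nat -> list (D*V)) (dd : D * V) :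
  (forall n, b n <> []) -> (forall n, is_path E (x n) (b n) (x (S n))) ->
  exists (vs : nat -> V) (cs : word D) (g : nat -> nat),
    (forall k, E (vs k) (cs k) (vs (S k))) /\
    (forall n, g (S n) = g n + length (b n)) /\
    (forall n j, j < length (b n) -> cs (g n + j) = fst (nth j (b n) dd)) /\
    (forall k, exists n j, j < length (b n) /\ k = g n + j).
Proof.
  intros Hne Hp.
  assert (Hlen : forall n, 0 < length (b n)).
  { intro n. specialize (Hne n). destruct (b n); simpl; [congruence|lia]. }
  pose (dec := fix dec k := match k with 0 => (0,0)
     | S k' => let (n, j) := dec k' in if S j <? length (b n) then (n, S j) else (S n, 0) end).
  pose (g := fix g n := match n with 0 => 0 | S m => g m + length (b m) end).
  assert (Inv : forall k, snd (dec k) < length (b (fst (dec k))) /\ k = g (fst (dec k)) + snd (dec k)).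
  { induction k.
    - simpl. split; auto.
    - simpl. destruct (dec k) as [n j]. simpl in IHk. destruct IHk as [h1 h2].
      destruct (S j <? length (b n)) eqn:E1.
      + apply Nat.ltb_lt in E1. simpl. split; lia.
      + apply Nat.ltb_ge in E1. simpl. split; auto. lia. }
  assert (gmono : forall n m, n <= m -> g n <= g m).
  { intros n m h; induction h; simpl; lia. }
  assert (decE : forall n j, j < length (b n) -> dec (g n + j) = (n, j)).
  { intros n j hj. destruct (Inv (g n + j)) as [h1 h2].
    destruct (dec (g n + j)) as [n' j'] eqn:HD. simpl in *.
    assert (n = n').
    { destruct (lt_eq_lt_dec n n') as [[l|l]|l]; auto.
      - pose proof (gmono (S n) n' l). simpl in H. lia.
      - pose proof (gmono (S n') n l). simpl in H. lia. }
    subst. f_equal. lia. }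
  exists (fun k => let (n, j) := dec k in nthv (x n) (b n) j).
  exists (fun k => let (n, j) := dec k in fst (nth j (b n) dd)).
  exists g. split; [|split; [|split]].
  - intro k. destruct (Inv k) as [h1 _]. simpl.
    destruct (dec k) as [n j]. simpl in h1.
    destruct (S j <? length (b n)) eqn:E1.
    + apply path_step with (u := x (S n)); auto.
    + apply Nat.ltb_ge in E1. simpl.
      assert (S j = length (b n)) by lia.
      pose proof (@path_step V D E _ _ _ dd (Hp n) j h1). rewrite H, (@path_end V D E _ _ _ (Hp n)) in H0. destruct (b (S n)) as [|[? ?] ?]; exact H0.
  - intro n. reflexivity.
  - intros n j hj. rewrite decE; auto.
  - intro k. destruct (Inv k) as [h1 h2]. eauto.
Qed.
Lemma lex_monotone (C1 C2 V1 V2 : Type) (E1 : edges V1 C1) (le1 : V1 -> V1 -> Prop)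
  (E2 : edges V2 C2) (le2 : V2 -> V2 -> Prop) :
  is_partial_order le2 -> monotone E1 le1 -> monotone E2 le2 ->
  monotone (lex_edges E1 E2 le2) (lex_le le1 le2).
Proof.
  intros [r2 [a2 t2]] m1 m2 [u1 u2] [v1 v2] c [w1 w2] [x1 x2] H1 He H2.
  unfold lex_le, strict in *; simpl in *.
  assert (l1 : le2 v2 u2) by (destruct H1 as [[h _]|[-> _]]; auto).
  assert (l2 : le2 x2 w2) by (destruct H2 as [[h _]|[-> _]]; auto).
  destruct c as [c|c]; simpl in *.
  - destruct He as [[h hne]|[-> he]].
    + left. split. apply t2 with w2; auto. apply t2 with v2; auto.
      intros Hx. subst x2.
      apply hne. apply a2; auto. apply t2 with u2; auto.
    + destruct (classic (x2 = u2)) as [Heq|Hne].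
      * subst x2. assert (u2 = w2) by (apply a2; auto). subst w2.
        right. split; auto.
        destruct H1 as [[_ h]|[_ h]]; [congruence|].
        destruct H2 as [[_ h']|[_ h']]; [congruence|]. eauto.
      * left. split; auto. apply t2 with w2; auto.
  - eauto.
Qed.

Lemma stab (V : Type) (le : V -> V -> Prop) :
  is_partial_order le -> well_founded (strict le) ->
  forall x (s : nat -> V), s 0 = x -> (forall n, le (s (S n)) (s n)) ->
  exists M, forall m, M <= m -> s m = s M.
Proof.
  intros [r [a t]] wf x. induction x as [x IH] using (well_founded_ind wf).
  intros s h0 hs.
  assert (L : forall n, le (s n) x).
  { induction n. rewrite h0; auto. eauto. }
  destruct (classic (forall n, s n = x)) as [A|A].
  - exists 0. intros m _. rewrite A, h0. auto.
  - apply not_all_ex_not in A. destruct A as [n hn].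
    destruct (IH (s n) (conj (L n) hn) (fun k => s (n + k)) ltac:(simpl; rewrite Nat.add_0_r; reflexivity)) as [M HM].
    { intro k. replace (n + S k) with (S (n + k)) by lia. auto. }
    exists (n + M). intros m hm. specialize (HM (m - n) ltac:(lia)).
    replace (n + (m - n)) with m in HM by lia. auto.
Qed.

Lemma prepend_shift (D : Type) (w : word D) j : forall s (t : word D),
  (forall n, t n = w (s + j + n)) -> forall n, prepend (map w (seq s j)) t n = w (s + n).
Proof.
  induction j; intros s t Ht n; simpl.
  - rewrite Ht. f_equal. lia.
  - destruct n. f_equal; lia.
    rewrite (IHj (S s) t). f_equal; lia. intro k. rewrite Ht. f_equal; lia.
Qed.
Lemma lex_satisfies (C1 C2 V1 V2 : Type) (W1 : objective C1) (W2 : objective C2)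
  (E1 : edges V1 C1) (E2 : edges V2 C2) (le2 : V2 -> V2 -> Prop) :
  is_partial_order le2 -> well_founded (strict le2) -> monotone E2 le2 ->
  prefix_independent W1 -> satisfies E1 W1 -> satisfies E2 W2 ->
  satisfies (lex_edges E1 E2 le2) (lex_obj W1 W2).
Proof.
  intros po2 wf2 m2 pi1 s1 s2 vs cs H.
  pose proof po2 as [r2 [a2 t2]].
  assert (stepl : forall n a, cs n = inl a -> le2 (snd (vs (S n))) (snd (vs n))).
  { intros n a e. specialize (H n). rewrite e in H. simpl in H.
    destruct H as [[h _]|[h _]]; auto. rewrite h; auto. }
  assert (dec : forall n, {is2 (cs n)} + {~ is2 (cs n)}).
  { intro n. destruct (cs n); simpl; auto. }
  destruct (classic (infinite2 cs)) as [Hinf|Hfin].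
  - left. split; auto.
    destruct (enum_inf (fun k => is2 (cs k)) dec Hinf) as [f [fi [fP fR]]].
    destruct (Hinf 0) as [k [_ hk]]. destruct (cs k) as [|c0] eqn:?; [contradiction|].
    exists (fun n => match cs (f n) with inr b => b | inl _ => c0 end). split.
    + exists f. split; auto. split.
      * intro n. specialize (fP n). simpl in fP. destruct (cs (f n)); [contradiction|reflexivity].
      * intros k' hk'. apply fR. destruct (cs k'); simpl in *; auto.
    + apply s2 with (vs := fun n => snd (vs (f n))). intro n.
      assert (e : E2 (snd (vs (f n))) (match cs (f n) with inr b => b | inl _ => c0 end) (snd (vs (S (f n))))).
      { specialize (H (f n)). specialize (fP n). destruct (cs (f n)); [contradiction|]. exact H. }
      assert (cl : forall d, S (f n) + d <= f (S n) -> le2 (snd (vs (S (f n) + d))) (snd (vs (S (f n))))).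
      { induction d; intro hd. rewrite Nat.add_0_r; auto.
        destruct (cs (S (f n) + d)) as [a|b] eqn:Ek.
        - apply t2 with (snd (vs (S (f n) + d))); [|apply IHd; lia].
          replace (S (f n) + S d) with (S (S (f n) + d)) by lia. eapply stepl; eauto.
        - exfalso. destruct (fR (S (f n) + d)) as [m hm]. rewrite Ek; simpl; auto.
          assert (n < m) by (apply (strict_mono_reflect f fi); lia).
          assert (m < S n) by (apply (strict_mono_reflect f fi); lia). lia. }
      specialize (cl (f (S n) - S (f n))). specialize (fi n).
      replace (S (f n) + (f (S n) - S (f n))) with (f (S n)) in cl by lia.
      eapply m2; [apply r2| exact e | apply cl; lia].
  - right.
    assert (HF : finite2 cs).
    { unfold infinite2 in Hfin. apply not_all_ex_not in Hfin. destruct Hfin as [N HN].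
      exists N. intros k hk h2. apply HN. eauto. }
    split; auto. destruct HF as [N HN].
    assert (inlN : forall k, N <= k -> exists a, cs k = inl a).
    { intros k hk. specialize (HN k hk). destruct (cs k); simpl in *; eauto. contradiction. }
    destruct (stab po2 wf2 (fun k => snd (vs (N + k))) eq_refl) as [M HM].
    { intro n. destruct (inlN (N + n)) as [a ha]. lia.
      replace (N + S n) with (S (N + n)) by lia. eapply stepl; eauto. }
    assert (dec1 : forall n, {~ is2 (cs n)} + {~ ~ is2 (cs n)}).
    { intro n. destruct (cs n); simpl; auto. }
    destruct (enum_inf (fun k => ~ is2 (cs k)) dec1) as [g [gi [gP gR]]].
    { intro N'. exists (N + N'). split. lia. apply HN. lia. }
    destruct (inlN N (le_n N)) as [a0 _].
    exists (fun n => match cs (g n) with inl a => a | inr _ => a0 end). split.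
    + exists g. split; auto. split.
      * intro n. specialize (gP n). simpl in gP. destruct (cs (g n)); [reflexivity|]. exfalso; apply gP; exact I.
      * intros k' hk'. apply gR. destruct (cs k'); simpl in *; auto.
    + set (v := fun n => match cs (g n) with inl a => a | inr _ => a0 end).
      destruct (gR (N + M)) as [j hj]. apply HN; lia.
      assert (G : forall n, g (j + n) = N + M + n).
      { induction n. rewrite Nat.add_0_r; lia.
        destruct (gR (N + M + S n)) as [m hm]. apply HN; lia.
        assert (j + n < m) by (apply (strict_mono_reflect g gi); lia).
        pose proof (strict_mono_le g gi (S (j+n)) m ltac:(lia)). pose proof (gi (j+n)).
        replace (j + S n) with (S (j+n)) by lia. lia. }
      assert (HW : W1 (fun n => v (j + n))).
      { apply s1 with (vs := fun n => fst (vs (N + M + n))). intro n.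
        destruct (inlN (N+M+n)) as [a ha]. lia.
        assert (hv : v (j + n) = a) by (unfold v; rewrite G, ha; reflexivity).
        rewrite hv. specialize (H (N+M+n)). rewrite ha in H. simpl in H.
        replace (N + M + S n) with (S (N + M + n)) by lia.
        destruct H as [[_ hne]|[_ he]]; auto. exfalso; apply hne.
        pose proof (HM (M + n) ltac:(lia)) as h1. pose proof (HM (M + S n) ltac:(lia)) as h2.
        simpl in h1, h2. rewrite Nat.add_assoc in h1, h2. rewrite Nat.add_succ_r in h2.
        congruence. }
      rewrite <- (pi1 (map v (seq 0 j))) in HW.
      assert (Hp : prepend (map v (seq 0 j)) (fun n => v (j+n)) = v).
      { extensionality n. apply (prepend_shift v j 0). intro; f_equal; lia. }
      rewrite Hp in HW. exact HW.
Qed.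
Lemma sig_eq (X : Type) (P : X -> Prop) (x y : sig P) : proj1_sig x = proj1_sig y -> x = y.
Proof. destruct x, y; simpl; intros ->; f_equal; apply proof_irrelevance. Qed.

Lemma card_sub (X K : Type) (P : X -> Prop) : card_lt X K -> card_lt (sig P) K.
Proof.
  intros [[f hf] hn]. split.
  - exists (fun x => f (proj1_sig x)). intros x y h. apply sig_eq. auto.
  - intros [g hg]. apply hn. exists (fun k => proj1_sig (g k)). intros x y h. apply hg. apply sig_eq. auto.
Qed.

Section Univ.
Context (C1 C2 K T : Type) (W1 : objective C1) (W2 : objective C2)
  (ET : edges T (C1 + C2)) (t0 : T)
  (Hpt : is_pretree ET t0) (Hcard : card_lt T K) (Hsat : satisfies ET (lex_obj W1 W2)).

Inductive R (a : T) : T -> Prop :=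
| R_refl : R a a
| R_step : forall s c t, R a s -> ET s (inl c) t -> R a t.

Definition broot (t : T) : Prop := t = t0 \/ exists s c2, ET s (inr c2) t.

Lemma no_in : forall x c, ~ ET x c t0.
Proof. exact (pretree_no_in Hpt). Qed.

Lemma par : forall a c a' c' b, ET a c b -> ET a' c' b -> a = a' /\ c = c'.
Proof. exact (pretree_parent Hpt). Qed.

Lemma broot_no_inl : forall a s c, broot a -> ~ ET s (inl c) a.
Proof.
  intros a s c [->|[s' [c2 e']]] e.
  - eapply no_in; eauto.
  - destruct (par e e') as [_ h]. discriminate.
Qed.

Lemma broot_R_unique : forall a s, R a s -> forall a', broot a -> broot a' -> R a' s -> a = a'.
Proof.
  intros a s H. induction H; intros a' ha ha' H'.
  - inversion H'; subst; auto. exact (False_ind _ (broot_no_inl ha H0)).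
  - inversion H'; subst.
    + exfalso. eapply broot_no_inl; eauto.
    + destruct (par H0 H2) as [-> _]. auto.
Qed.

Definition V2' := {t : T | broot t}.
Definition E2' : edges V2' C2 :=
  fun a c2 b => exists s, R (proj1_sig a) s /\ ET s (inr c2) (proj1_sig b).
Definition root2 : V2' := exist _ t0 (or_introl eq_refl).

Lemma reach : forall p t, is_path ET t0 p t ->
  exists a : V2', R (proj1_sig a) t /\ exists q, is_path E2' root2 q a.
Proof.
  intros p. induction p as [|[c x] p IH] using rev_ind; intros t h.
  - simpl in h. subst. exists root2. split. apply R_refl. exists []. reflexivity.
  - apply is_path_app in h. destruct h as [v [hv [e <-]]].
    destruct (IH v hv) as [a [ha [q hq]]].
    destruct c as [c1|c2].
    + exists a. split; eauto. eapply R_step; eauto.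
    + assert (hb : broot x) by (right; eauto).
      exists (exist _ x hb). split. apply R_refl.
      exists (q ++ [(c2, exist _ x hb)]). apply is_path_app. exists a. split; auto.
      simpl. split; auto. exists v. split; auto.
Qed.

Lemma anc_ex : forall t, exists a : V2', R (proj1_sig a) t.
Proof.
  intro t. destruct (Hpt t) as [p [hp _]]. destruct (@reach p _ hp) as [a [ha _]]. eauto.
Qed.

Lemma T2_pretree : is_pretree E2' root2.
Proof.
  intro b. destruct (Hpt (proj1_sig b)) as [p [hp _]].
  destruct (@reach p _ hp) as [a [ha [q hq]]].
  assert (a = b).
  { apply sig_eq. apply (broot_R_unique ha). apply (proj2_sig a). apply (proj2_sig b). apply R_refl. }
  subst a. exists q. split; auto.
  intros q' hq'. symmetry. eapply uniq_paths; eauto.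
  - intros x c [s [_ e]]. eapply no_in; eauto.
  - intros x c x' c' y [s [hs e]] [s' [hs' e']].
    destruct (par e e') as [<- h]. injection h as ->. split; auto.
    apply sig_eq. eapply broot_R_unique; eauto. apply (proj2_sig x). apply (proj2_sig x').
Qed.


Definition inl' (cx : C1 * T) : (C1 + C2) * T := (inl (fst cx), snd cx).

Lemma R_path : forall a t, R a t -> exists p : list (C1 * T), is_path ET a (map inl' p) t.
Proof.
  intros a t H. induction H.
  - exists []. reflexivity.
  - destruct IHR as [p hp]. exists (p ++ [(c, t)]). rewrite map_app.
    apply is_path_app. exists s. simpl. auto.
Qed.

Lemma nth_map_inl' (l : list (C1 * T)) z dd j : j < length l ->
  exists y, nth j (map inl' l ++ z) dd = inl' y.
Proof.
  intro hj. rewrite app_nth1 by (rewrite length_map; auto).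
  assert (In (nth j (map inl' l) dd) (map inl' l)) by (apply nth_In; rewrite length_map; auto).
  apply in_map_iff in H. destruct H as [y [hy _]]. eauto.
Qed.

Lemma T2_sat : satisfies E2' W2.
Proof.
  intros xs c2s H.
  assert (Hx : forall n, exists p : list (C1 * T),
    is_path ET (proj1_sig (xs n)) (map inl' p ++ [(inr (c2s n), proj1_sig (xs (S n)))]) (proj1_sig (xs (S n)))).
  { intro n. destruct (H n) as [s [hs e]]. destruct (R_path hs) as [p hp]. exists p.
    apply is_path_app. exists s. simpl. auto. }
  pose (pp := fun n => proj1_sig (constructive_indefinite_description _ (Hx n))).
  assert (Hpp : forall n, is_path ET (proj1_sig (xs n)) (map inl' (pp n) ++ [(inr (c2s n), proj1_sig (xs (S n)))]) (proj1_sig (xs (S n)))).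
  { intro n. unfold pp. destruct (constructive_indefinite_description _ (Hx n)). simpl. auto. }
  set (b := fun n => map inl' (pp n) ++ [(inr (c2s n), proj1_sig (xs (S n)))]).
  assert (Hb : forall n, b n <> []). { intro n. unfold b. destruct (map inl' (pp n)); discriminate. }
  assert (Hlb : forall n, length (b n) = length (pp n) + 1).
  { intro n. unfold b. rewrite length_app, length_map. reflexivity. }
  idtac. 
  destruct (concat_paths ET (fun n => proj1_sig (xs n)) b (inr (c2s 0), t0) Hb Hpp)
    as [vs [cs [g [He [gS [gcs gdec]]]]]].
  pose proof (Hsat vs cs He) as HL.
  pose (f := fun n => g n + length (pp n)).
  assert (fi : forall n, f n < f (S n)).
  { intro n. unfold f. rewrite gS, Hlb. lia. }
  assert (fc : forall n, cs (f n) = inr (c2s n)).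
  { intro n. unfold f. rewrite gcs by (rewrite Hlb; lia). unfold b.
    rewrite app_nth2 by (rewrite length_map; lia). rewrite length_map, Nat.sub_diag. reflexivity. }
  assert (Hfil : filtered (@proj2c C1 C2) cs c2s).
  { exists f. split; auto. split.
    - intro n. rewrite fc. reflexivity.
    - intros k hk. destruct (gdec k) as [n [j [hj ->]]]. rewrite Hlb in hj.
      destruct (Nat.eq_dec j (length (pp n))) as [->|hne]. exists n; reflexivity.
      exfalso. apply hk. rewrite gcs by (rewrite Hlb; lia). unfold b.
      destruct (nth_map_inl' (pp n) [(inr (c2s n), proj1_sig (xs (S n)))] (inr (c2s 0), t0) (j:=j) ltac:(lia)) as [y hy].
      rewrite hy. reflexivity. }
  destruct HL as [[_ [v [hv hW]]]|[[N HN] _]].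
  - rewrite (filtered_unique _ _ _ _ _ _ hv Hfil) in hW. exact hW.
  - exfalso. apply (HN (f N)). pose proof (strict_mono_id f fi N). lia. rewrite fc. exact I.
Qed.


Definition Vb (a : T) := {t : T | R a t}.
Definition Eb (a : T) : edges (Vb a) C1 :=
  fun x c y => ET (proj1_sig x) (inl c) (proj1_sig y).
Definition rootb (a : T) : Vb a := exist _ a (R_refl a).

Lemma Vb_pretree (a : T) : broot a -> is_pretree (@Eb a) (@rootb a).
Proof.
  intros ha.
  assert (ex : forall t, R a t -> exists q (y : Vb a), is_path (@Eb a) (@rootb a) q y /\ proj1_sig y = t).
  { intros t H. induction H.
    - exists [], (@rootb a). split; reflexivity.
    - destruct IHR as [q [y [hq hy]]].
      exists (q ++ [(c, exist _ t (R_step H H0))]), (exist _ t (R_step H H0)). split; auto.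
      apply is_path_app. exists y. split; auto. simpl. split; auto. unfold Eb. rewrite hy. exact H0. }
  intro x. destruct (ex _ (proj2_sig x)) as [q [y [hq hy]]].
  assert (y = x) by (apply sig_eq; auto). subst y.
  exists q. split; auto. intros q' hq'. symmetry. eapply uniq_paths; eauto.
  - intros z c e. unfold Eb in e. simpl in e. eapply broot_no_inl; eauto.
  - intros z c z' c' w e e'. unfold Eb in e, e'. destruct (par e e') as [h1 h2].
    injection h2 as ->. split; auto. apply sig_eq; auto.
Qed.

Lemma Vb_sat (a : T) : satisfies (@Eb a) W1.
Proof.
  intros xs cs H.
  pose proof (Hsat (fun n => proj1_sig (xs n)) (fun n => inl (cs n)) H) as HL.
  assert (Hfil : filtered (@proj1c C1 C2) (fun n => inl (cs n)) cs).
  { exists (fun n => n). split; [auto|split]; [reflexivity|]. intros k _. eauto. }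
  destruct HL as [[Hi _]|[_ [v [hv hW]]]].
  - destruct (Hi 0) as [k [_ hk]]. destruct hk.
  - rewrite (filtered_unique _ _ _ _ _ _ hv Hfil) in hW. exact hW.
Qed.


Lemma build (V1 V2 : Type) (E1 : edges V1 C1) (E2 : edges V2 C2) (le2 : V2 -> V2 -> Prop)
  (u1 : forall (T' : Type) (ET' : edges T' C1) (t0' : T'), is_pretree ET' t0' -> card_lt T' K ->
        satisfies ET' W1 -> exists phi : T' -> V1, is_morphism ET' E1 phi)
  (u2 : forall (T' : Type) (ET' : edges T' C2) (t0' : T'), is_pretree ET' t0' -> card_lt T' K ->
        satisfies ET' W2 -> exists phi : T' -> V2, is_morphism ET' E2 phi) :
  exists phi : T -> V1 * V2, is_morphism ET (lex_edges E1 E2 le2) phi.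
Proof.
  destruct (u2 _ _ _ T2_pretree (card_sub _ Hcard) T2_sat) as [phi2 hphi2].
  assert (F : forall a : V2', exists ph : Vb (proj1_sig a) -> V1, is_morphism (@Eb (proj1_sig a)) E1 ph).
  { intro a. apply (u1 _ _ _ (Vb_pretree (proj2_sig a)) (card_sub _ Hcard) (@Vb_sat (proj1_sig a))). }
  pose (Ph := fun a => proj1_sig (constructive_indefinite_description _ (F a))).
  assert (HPh : forall a, is_morphism (@Eb (proj1_sig a)) E1 (Ph a)).
  { intro a. unfold Ph. destruct (constructive_indefinite_description _ (F a)). auto. }
  pose (anc := fun t => proj1_sig (constructive_indefinite_description _ (anc_ex t))).
  assert (Hanc : forall t, R (proj1_sig (anc t)) t).
  { intro t. unfold anc. destruct (constructive_indefinite_description _ (anc_ex t)). auto. }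
  pose (d1 := Ph root2 (@rootb t0)).
  pose (psi := fun (a : V2') t => match excluded_middle_informative (R (proj1_sig a) t) with
                  | left h => Ph a (exist _ t h) | right _ => d1 end).
  assert (Hpsi : forall a t (h : R (proj1_sig a) t), psi a t = Ph a (exist _ t h)).
  { intros a t h. unfold psi. destruct (excluded_middle_informative (R (proj1_sig a) t)) as [h'|h'].
    - f_equal. apply sig_eq. reflexivity.
    - contradiction. }
  exists (fun t => (psi (anc t) t, phi2 (anc t))).
  intros t c t' e. destruct c as [c1|c2]; simpl.
  - assert (Heq : anc t' = anc t).
    { apply sig_eq. eapply broot_R_unique. apply Hanc. apply (proj2_sig _). apply (proj2_sig _).
      eapply R_step. apply Hanc. exact e. }
    right. rewrite Heq. split; auto.
    rewrite (Hpsi _ _ (Hanc t)).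
    assert (h' : R (proj1_sig (anc t)) t') by (eapply R_step; [apply Hanc|exact e]).
    rewrite (Hpsi _ _ h'). apply HPh. exact e.
  - assert (hb : broot t') by (right; eauto).
    assert (Heq : proj1_sig (anc t') = t').
    { eapply broot_R_unique. apply Hanc. apply (proj2_sig _). exact hb. apply R_refl. }
    apply hphi2. exists t. split. apply Hanc. rewrite Heq. exact e.
Qed.

End Univ.

Unset Implicit Arguments.

Theorem theorem6p3 (C1 C2 K V1 V2 : Type)
  (W1 : objective C1) (W2 : objective C2)
  (E1 : edges V1 C1) (le1 : V1 -> V1 -> Prop)
  (E2 : edges V2 C2) (le2 : V2 -> V2 -> Prop) :
  prefix_independent W1 -> prefix_independent W2 ->
  well_monotone E1 le1 -> well_monotone E2 le2 ->
  universal K E1 W1 -> universal K E2 W2 ->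
  monotone (lex_edges E1 E2 le2) (lex_le le1 le2) /\
  universal K (lex_edges E1 E2 le2) (lex_obj W1 W2).
Proof.
  intros pi1 pi2 [po1 [m1 wf1]] [po2 [m2 wf2]] [g1 [s1 u1]] [g2 [s2 u2]].
  split. apply lex_monotone; auto.
  split; [|split].
  - intros [x1 x2]. destruct (g2 x2) as [c [y e]]. exists (inr c), (x1, y). exact e.
  - apply lex_satisfies; auto.
  - intros T ET t0 hp hc hs. eapply build; eauto.
Qed.
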